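(* Let $\bm{X},\bm{X}_\star\in\mathbb{R}^{n_1\times r}$ and $\bm{Y},\bm{Y}_\star\in\mathbb{R}^{n_2\times r}$ be arbitrary. Suppose there exists an invertible $\bm{Q}\in\mathbb{R}^{r\times r}$ minimizing $\|\bm{X}\bm{P}-\bm{X}_\star\|_{\mathrm{F}}^2+\|\bm{Y}\bm{P}^{-\top}-\bm{Y}_\star\|_{\mathrm{F}}^2$ over all invertible $\bm{P}\in\mathbb{R}^{r\times r}$. Let $\tilde{\bm{X}}=\bm{X}\bm{Q}$ and $\tilde{\bm{Y}}=\bm{Y}\bm{Q}^{-\top}$. Then \[ \tilde{\bm{X}}^\top(\tilde{\bm{X}}-\bm{X}_\star)=(\tilde{\bm{Y}}-\bm{Y}_\star)^\top\tilde{\bm{Y}}. \]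
   Context: $\bm{P}^{-\top}=(\bm{P}^{-1})^\top$. *)

(* Defs.v *)
From HB Require Import structures.
From mathcomp Require Import all_boot all_order all_algebra.
From mathcomp Require Import reals.
Set Implicit Arguments. Unset Strict Implicit. Unset Printing Implicit Defensive.
Import Order.TTheory GRing.Theory Num.Theory.
Local Open Scope ring_scope.

Definition frob2 (R : realType) (m n : nat) (A : 'M[R]_(m, n)) : R :=
  \sum_(i < m) \sum_(j < n) A i j ^+ 2.

Definition bal_obj (R : realType) (n1 n2 r : nat)
  (X Xs : 'M[R]_(n1, r)) (Y Ys : 'M[R]_(n2, r)) (P : 'M[R]_r) : R :=
  frob2 (X *m P - Xs) + frob2 (Y *m (invmx P)^T - Ys).

(* Main.v *)
Require Import Defs.
From HB Require Import structures.
From mathcomp Require Import all_boot all_order all_algebra.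
From mathcomp Require Import reals.
From mathcomp Require Import ring lra.
Import Order.TTheory GRing.Theory Num.Theory.
Local Open Scope ring_scope.

Lemma bal_key (R : realFieldType) (al ga be de k : R) : 0 <= be -> 0 <= de -> 0 <= k <= 1 ->
  (forall t, -1/2 <= t <= 1/2 -> 0 <= 2*t*al + t^+2*be - 2*(t/(1+k*t))*ga + (t/(1+k*t))^+2*de) ->
  al = ga.
Proof.
move=> be0 de0 /andP[k0 k1] H.
set g := al - ga.
have [a1 a2] : al <= `|al| /\ - `|al| <= al.
  by split; [exact: ler_norm | rewrite lerNl -normrN; exact: ler_norm].
have [c1 c2] : ga <= `|ga| /\ - `|ga| <= ga.
  by split; [exact: ler_norm | rewrite lerNl -normrN; exact: ler_norm].
set A := `|al| in a1 a2; set C := `|ga| in c1 c2.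
set M := 1 + 5 * A + 2 * C + 3 * be + de.
have M1 : 1 <= M by rewrite /M; lra.
have M0 : 0 < M by lra.
set t := - g / (4 * M).
have tM : t * (4 * M) = - g by rewrite /t mulrVK // unitfE; lra.
have gM1 : g <= M by rewrite /g /M; lra.
have gM2 : - M <= g by rewrite /g /M; lra.
have t1 : - 1/4 <= t <= 1/4.
  apply/andP; split; nra.
set m := 1 + k * t.
have m1 : 3/4 <= m <= 5/4 by apply/andP; split; rewrite /m; nra.
have Ht := H t ltac:(apply/andP; split; lra).
set K := 2*k*(2*al-ga) + 2*k^+2*t*al + be * m^+2 + de.
have iden : m^+2 * (2*t*al + t^+2*be - 2*(t/(1+k*t))*ga + (t/(1+k*t))^+2*de)
   = t * (2 * g + t * K).
  have mpos : 0 < 1 + k * t by move: m1; rewrite /m; lra.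
  rewrite /K /g /m; field; by rewrite gt_eqF.
have P0 : 0 <= t * (2 * g + t * K).
  rewrite -iden; apply: mulr_ge0 => //; exact: sqr_ge0.
have b1 : k * (2*al - ga) <= 2 * A + C by nra.
have b2 : - (2 * A + C) <= k * (2*al - ga) by nra.
have k2 : 0 <= k^+2 <= 1 by apply/andP; split; nra.
clearbody m t.
case/andP: k2 => k21 k22; case/andP: t1 => t11 t12; case/andP: m1 => m11 m12.
have s1 : -1/4 <= k^+2 * t <= 1/4.
  by apply/andP; split; nra.
have b3 : k^+2 * t * al <= A / 4 by nra.
have b4 : - (A / 4) <= k^+2 * t * al by nra.
have msq : m^+2 <= 2 by nra.
have b5 : 0 <= be * m^+2 <= 2 * be.
  by apply/andP; split; nra.
move/andP: b5 => [b51 b52].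
have KM1 : K <= M by rewrite /K /M; lra.
have KM2 : - M <= K by rewrite /K /M; lra.
have Z0 : 0 <= (4 * M) * ((4 * M) * (t * (2 * g + t * K))).
  by apply: mulr_ge0; [lra | apply: mulr_ge0; [lra|]].
have ZE : (4 * M) * ((4 * M) * (t * (2 * g + t * K))) = - 8 * M * g^+2 + g^+2 * K.
  have -> : (4 * M) * ((4 * M) * (t * (2 * g + t * K))) =
     (t * (4 * M)) * (2 * (4 * M) * g + (t * (4 * M)) * K) by ring.
  rewrite tM; ring.
rewrite ZE in Z0.
have g2 : 0 <= g^+2 := sqr_ge0 g.
have gK : g^+2 * K <= g^+2 * M by apply: ler_wpM2l.
have : g^+2 <= 0 by nra.
move=> h; have : g^+2 = 0 by apply/eqP; rewrite eq_le h g2.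
move/eqP; rewrite sqrf_eq0 /g subr_eq0 => /eqP //.
Qed.


Definition ip {R : realType} {m n : nat} (A B : 'M[R]_(m, n)) : R := \sum_(i < m) \sum_(j < n) A i j * B i j.

Lemma frob2_lin {R : realType} m n (A B : 'M[R]_(m, n)) c :
  frob2 (A + c *: B) = frob2 A + 2 * c * ip A B + c^+2 * frob2 B.
Proof.
rewrite /frob2 /ip !mulr_sumr -!big_split /=; apply: eq_bigr => i _.
rewrite !mulr_sumr -!big_split /=; apply: eq_bigr => j _.
rewrite !mxE; ring.
Qed.

Lemma frob2_ge0 {R : realType} m n (A : 'M[R]_(m, n)) : 0 <= frob2 A.
Proof.
by apply: sumr_ge0 => i _; apply: sumr_ge0 => j _; exact: sqr_ge0.
Qed.

Lemma mul_delta_entry {R : realType} m n p (B : 'M[R]_(m, n)) (a : 'I_n) (b : 'I_p) i j :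
  (B *m delta_mx a b) i j = B i a * (j == b)%:R.
Proof.
rewrite mxE (bigD1 a) //= big1 ?addr0; first by rewrite mxE eqxx.
by move=> k /negbTE kna; rewrite mxE kna mulr0.
Qed.

Lemma ip_delta {R : realType} m n p (A : 'M[R]_(m, p)) (B : 'M[R]_(m, n)) (a : 'I_n) (b : 'I_p) :
  ip A (B *m delta_mx a b) = (B^T *m A) a b.
Proof.
rewrite /ip mxE; apply: eq_bigr => i _.
rewrite (bigD1 b) //= big1 ?addr0.
  by rewrite mul_delta_entry eqxx mulr1 mxE mulrC.
by move=> j /negbTE jnb; rewrite mul_delta_entry jnb mulr0 mulr0.
Qed.


Theorem lemma2 (R : realType) (n1 n2 r : nat)
  (X Xs : 'M[R]_(n1, r)) (Y Ys : 'M[R]_(n2, r)) (Q : 'M[R]_r) :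
  Q \in unitmx ->
  (forall P : 'M[R]_r, P \in unitmx ->
     bal_obj X Xs Y Ys Q <= bal_obj X Xs Y Ys P) ->
  let Xt := X *m Q in
  let Yt := Y *m (invmx Q)^T in
  Xt^T *m (Xt - Xs) = (Yt - Ys)^T *m Yt.
Proof.
move=> uQ opt Xt Yt.
apply/matrixP => a b.
pose E : 'M[R]_r := delta_mx a b.
pose kap : R := (a == b)%:R.
have EE : E *m E = kap *: E.
  by rewrite /E mul_delta_mx_cond scaler_nat eq_sym.
have k01 : 0 <= kap <= 1 by rewrite /kap; case: (a == b); apply/andP; split.
have Hal : ip (Xt - Xs) (Xt *m E) = (Xt^T *m (Xt - Xs)) a b by rewrite ip_delta.
have Hga : ip (Yt - Ys) (Yt *m E^T) = ((Yt - Ys)^T *m Yt) a b.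
  rewrite /E trmx_delta ip_delta.
  have -> : ((Yt - Ys)^T *m Yt) a b = (((Yt - Ys)^T *m Yt)^T) b a by rewrite [RHS]mxE.
  by rewrite [in RHS]trmx_mul trmxK.
rewrite -Hal -Hga.
apply: (@bal_key R _ _ (frob2 (Xt *m E)) (frob2 (Yt *m E^T)) kap); [exact: frob2_ge0 | exact: frob2_ge0 | exact: k01 |].
move=> t /andP[t1 t2].
pose u := t / (1 + kap * t).
have mpos : 0 < 1 + kap * t by case/andP: k01 => ? ?; nra.
pose P := Q *m (1%:M + t *: E).
have PB : P *m ((1%:M - u *: E) *m invmx Q) = 1%:M.
  rewrite /P -mulmxA (mulmxA (1%:M + t *: E)).
  have -> : (1%:M + t *: E) *m (1%:M - u *: E) = 1%:M :> 'M[R]_r.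
    rewrite mulmxDl mulmxBr mulmxBr !mul1mx mulmx1 -scalemxAl -scalemxAr EE.
    have hu : t * u * kap = t - u by rewrite /u; field; rewrite gt_eqF.
    apply/matrixP => i j; rewrite !mxE.
    set e := (((i == a) && (j == b))%:R : R).
    transitivity ((i == j)%:R + e * (t - u - t * u * kap)); first by ring.
    by rewrite hu subrr mulr0 addr0.
  by rewrite mul1mx mulmxV.
have uP : P \in unitmx by case: (mulmx1_unit PB).
have iP : invmx P = (1%:M - u *: E) *m invmx Q.
  transitivity (invmx P *m (P *m ((1%:M - u *: E) *m invmx Q))).
    by rewrite PB mulmx1.
  by rewrite mulKmx.
have h := opt P uP.
have e1 : X *m P - Xs = (Xt - Xs) + t *: (Xt *m E).
  rewrite /P mulmxA -/Xt mulmxDr mulmx1 -scalemxAr.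
  by rewrite addrAC.
have e2 : Y *m (invmx P)^T - Ys = (Yt - Ys) + (- u) *: (Yt *m E^T).
  rewrite iP trmx_mul mulmxA -/Yt.
  rewrite linearB /= trmx1 linearZ /= mulmxBr mulmx1 -scalemxAr.
  by rewrite scaleNr addrAC.
move: h; rewrite /bal_obj e1 e2 !frob2_lin -/Xt -/Yt -/u sqrrN.
lra.
Qed.
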